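(* Let $\mathcal{V}$ be an entropic Jónsson–Tarski variety and $\mathcal{V}_\mathsf{Ab}$ its abelian core. Then: (1) $\mathcal{V}_\mathsf{Ab}$ is a full, isomorphism-closed, reflective subcategory of $\mathcal{V}$. (2) The assignment $A\mapsto Inv(A)$ defines a functor $Inv\colon\mathcal{V}\to\mathcal{V}_\mathsf{Ab}$ which is right adjoint to the embedding $\mathcal{V}_\mathsf{Ab}\hookrightarrow\mathcal{V}$; moreover, the composite $\mathcal{V}_\mathsf{Ab}\hookrightarrow\mathcal{V}\xrightarrow{Inv}\mathcal{V}_\mathsf{Ab}$ is the identity. (3) $\mathcal{V}_\mathsf{Ab}$ is closed under the entropic tensor product $-\otimes_\mathcal{V}-$ of $\mathcal{V}$; consequently the entropic monoidal structure of $\mathcal{V}_\mathsf{Ab}$ is given by $-\otimes_\mathcal{V}-$ with unit object the reflection $RF1$ of $F1$ into $\mathcal{V}_\mathsf{Ab}$. (4) The embedding $\mathcal{V}_\mathsf{Ab}\hookrightarrow\mathcal{V}$ is a symmetric monoidal functor.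
   Context: A variety is a finitary one-sorted variety of algebras. It is entropic if its algebraic theory is commutative (every operation is a homomorphism); then it is symmetric monoidal closed under the entropic tensor product $A\otimes_\mathcal{V} B$, characterized by a universal bimorphism $A\times B\to A\otimes_\mathcal{V}B$ (every map $A\times B\to C$ homomorphic in each variable factors uniquely through it via a homomorphism), with unit the free algebra $F1$ on one generator and internal hom $[A,B]$ the subalgebra of $B^A$ consisting of homomorphisms. A Jónsson–Tarski variety has a nullary operation $0$ and binary operation $+$ with $x+0=x=0+x$. An element $x$ of a $\mathcal{V}$-algebra $A$ is invertible if there is $y$ with $x+y=0=y+x$ (written $y=-x$); $Inv(A)$ is the set of invertible elements, which is a subalgebra of $A$. The abelian core $\mathcal{V}_\mathsf{Ab}$ is the full subcategory of $\mathcal{V}$ spanned by the algebras $A$ with $Inv(A)=A$; it is itself an entropic Jónsson–Tarski variety (equivalently, the category of internal groups in $\mathcal{V}$), and its entropic tensor product is the one defined intrinsically in $\mathcal{V}_\mathsf{Ab}$. *)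

(* Defs.v *)
From mathcomp Require Import all_boot.

Set Implicit Arguments.
Unset Strict Implicit.
Unset Printing Implicit Defensive.

Record signature := Signature {
  op_sym : Type;
  arity : op_sym -> nat
}.

Record algebra (S : signature) := Algebra {
  carrier :> Type;
  interp : forall o : op_sym S, ('I_(arity o) -> carrier) -> carrier
}.
Arguments interp {S} A o args : rename.

Inductive term (S : signature) (X : Type) : Type :=
  | Var : X -> term S X
  | App : forall o : op_sym S, ('I_(arity o) -> term S X) -> term S X.
Arguments Var {S X} x.
Arguments App {S X} o args.

Fixpoint eval (S : signature) (X : Type) (A : algebra S) (v : X -> A)
    (t : term S X) : A :=
  match t with
  | Var x => v x
  | App o args => interp A o (fun i => eval v (args i))
  end.
Arguments eval {S X A} v t.

Record variety := Variety {
  vsig : signature;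
  eqns : term vsig nat -> term vsig nat -> Prop
}.

Section Defs.
Variable V : variety.
Notation S := (vsig V).
Notation alg := (algebra S).

Definition inV (A : alg) : Prop :=
  forall s t, eqns s t -> forall v : nat -> A, eval v s = eval v t.

Definition is_hom (A B : alg) (f : A -> B) : Prop :=
  forall (o : op_sym S) (args : 'I_(arity o) -> A),
    f (interp A o args) = interp B o (fun i => f (args i)).

(* Entropic = the algebraic theory is commutative: in every V-algebra every
   basic operation commutes with every other one (equivalently, every
   operation is a homomorphism A^n -> A). *)
Definition entropic : Prop :=
  forall A : alg, inV A ->
  forall (o o' : op_sym S) (x : 'I_(arity o) -> 'I_(arity o') -> A),
    interp A o (fun i => interp A o' (fun j => x i j)) =
    interp A o' (fun j => interp A o (fun i => x i j)).

(* Jonsson-Tarski structure: a nullary (derived) operation 0, given as a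
   closed term, and a binary (derived) operation +, given as a term in the
   two variables true (= x) and false (= y). *)
Variable zero : term S Empty_set.
Variable plus : term S bool.

Definition zeroA (A : alg) : A := eval (fun e : Empty_set => match e with end) zero.
Definition plusA (A : alg) (x y : A) : A :=
  eval (fun b : bool => if b then x else y) plus.

Definition jonsson_tarski : Prop :=
  forall A : alg, inV A ->
  forall x : A, plusA x (zeroA A) = x /\ plusA (zeroA A) x = x.

Definition Inv (A : alg) (x : A) : Prop :=
  exists y : A, plusA x y = zeroA A /\ plusA y x = zeroA A.

Definition abelian (A : alg) : Prop := forall x : A, Inv x.

Definition inVAb (A : alg) : Prop := inV A /\ abelian A.

Definition reflection (A R : alg) (eta : A -> R) : Prop :=
  inVAb R /\ is_hom eta /\
  forall (B : alg) (f : A -> B), inVAb B -> is_hom f ->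
    (exists h : R -> B, is_hom h /\ forall a, h (eta a) = f a) /\
    (forall h1 h2 : R -> B, is_hom h1 -> is_hom h2 ->
       (forall a, h1 (eta a) = f a) -> (forall a, h2 (eta a) = f a) ->
       forall r, h1 r = h2 r).

Definition bimorphism (A B C : alg) (t : A -> B -> C) : Prop :=
  (forall a, is_hom (t a)) /\ (forall b, is_hom (fun a => t a b)).

(* Universal bimorphism relative to a class P of target algebras
   (P = inV : entropic tensor product of V; P = inVAb : that of V_Ab). *)
Definition is_tensor_in (P : alg -> Prop) (A B T : alg) (t : A -> B -> T) : Prop :=
  P T /\ bimorphism t /\
  forall (C : alg) (f : A -> B -> C), P C -> bimorphism f ->
    (exists h : T -> C, is_hom h /\ forall a b, h (t a b) = f a b) /\
    (forall h1 h2 : T -> C, is_hom h1 -> is_hom h2 ->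
       (forall a b, h1 (t a b) = f a b) -> (forall a b, h2 (t a b) = f a b) ->
       forall x, h1 x = h2 x).

Definition is_tensor := is_tensor_in inV.
Definition is_tensorAb := is_tensor_in inVAb.

Definition free_on_one_in (P : alg -> Prop) (F : alg) (g : F) : Prop :=
  P F /\
  forall (B : alg) (b : B), P B ->
    (exists h : F -> B, is_hom h /\ h g = b) /\
    (forall h1 h2 : F -> B, is_hom h1 -> is_hom h2 -> h1 g = b -> h2 g = b ->
       forall x, h1 x = h2 x).

Definition free_on_one := free_on_one_in inV.
Definition free_on_oneAb := free_on_one_in inVAb.

End Defs.

(* Main.v *)
Require Import Defs.
From mathcomp Require Import all_boot.
From Stdlib Require Import FunctionalExtensionality PropExtensionality ProofIrrelevance ClassicalEpsilon.
Set Implicit Arguments. Unset Strict Implicit.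

Section H.
Variable V : variety.
Notation S := (vsig V).
Variable zero : term S Empty_set.
Variable plus : term S bool.
Hypothesis Hent : entropic V.
Hypothesis HJT : jonsson_tarski zero plus.
Local Notation p := (plusA plus).
Local Notation z := (zeroA zero).

Lemma eval_ext X (A : algebra S) (v w : X -> A) t :
  (forall x, v x = w x) -> eval v t = eval w t.
Proof.
move=> H; elim: t => [x|o args IH] /=; first exact: H.
congr (interp A o); apply: functional_extensionality => i; exact: IH.
Qed.

Lemma eval_hom X (A B : algebra S) (f : A -> B) (v : X -> A) t :
  is_hom f -> f (eval v t) = eval (fun x => f (v x)) t.
Proof.
move=> Hf; elim: t => [x|o args IH] //=; rewrite Hf.
congr (interp B o); apply: functional_extensionality => i; exact: IH.
Qed.

Lemma hom_plus (A B : algebra S) (f : A -> B) x y :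
  is_hom f -> f (p x y) = p (f x) (f y).
Proof. by move=> Hf; rewrite /plusA eval_hom //; apply: eval_ext; case. Qed.

Lemma hom_zero (A B : algebra S) (f : A -> B) :
  is_hom f -> f (z A) = z B.
Proof. by move=> Hf; rewrite /zeroA eval_hom //; apply: eval_ext; case. Qed.

Lemma interp_eval X (A : algebra S) (HA : inV A) o (v : 'I_(arity o) -> X -> A) t :
  interp A o (fun i => eval (v i) t) = eval (fun x => interp A o (fun i => v i x)) t.
Proof.
elim: t => [x|o' args IH] //=.
rewrite (@Hent A HA o o' (fun i j => eval (v i) (args j))).
congr (interp A o'); apply: functional_extensionality => j; exact: IH.
Qed.

Lemma eval_eval X Y (A : algebra S) (HA : inV A) (w : X -> Y -> A) s t :
  eval (fun x => eval (w x) t) s = eval (fun y => eval (fun x => w x y) s) t.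
Proof.
elim: s => [x|o args IH] //=.
have -> : (fun i => eval (fun x => eval (w x) t) (args i)) =
          (fun i => eval (fun y => eval (fun x => w x y) (args i)) t).
  by apply: functional_extensionality => i; exact: IH.
exact: (interp_eval HA (fun i y => eval (fun x => w x y) (args i))).
Qed.

Lemma interp_plus (A : algebra S) (HA : inV A) o (x y : 'I_(arity o) -> A) :
  interp A o (fun i => p (x i) (y i)) = p (interp A o x) (interp A o y).
Proof.
rewrite /plusA (interp_eval HA (fun i b => if b then x i else y i)).
by apply: eval_ext; case.
Qed.

Lemma interp_zero (A : algebra S) (HA : inV A) o :
  interp A o (fun _ => z A) = z A.
Proof.
rewrite /zeroA (interp_eval HA (fun i (e : Empty_set) => match e with end)).
by apply: eval_ext; case.
Qed.

Section CM.
Variable A : algebra S.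
Hypothesis HA : inV A.

Lemma p0x (x : A) : p (z A) x = x. Proof. by case: (HJT HA x). Qed.
Lemma px0 (x : A) : p x (z A) = x. Proof. by case: (HJT HA x). Qed.

Lemma pI (a b c d : A) : p (p a b) (p c d) = p (p a c) (p b d).
Proof.
rewrite /plusA.
set w := fun (x y : bool) => if x then (if y then a else b) else (if y then c else d).
transitivity (eval (fun x => eval (w x) plus) plus); first by apply: eval_ext; case.
rewrite eval_eval //; apply: eval_ext; case; by apply: eval_ext; case.
Qed.

Lemma pC (a b : A) : p a b = p b a.
Proof. by rewrite -[a in LHS]p0x -[b in LHS]px0 pI p0x px0. Qed.

Lemma pA (a b c : A) : p (p a b) c = p a (p b c).
Proof. by rewrite -[c in LHS]p0x pI px0. Qed.

Lemma pAC (a b c : A) : p (p a b) c = p (p a c) b.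
Proof. by rewrite pA // (pC b) -pA. Qed.

Lemma pCA (a b c : A) : p a (p b c) = p b (p a c).
Proof. by rewrite -pA (pC a) pA. Qed.

End CM.

Lemma hom_Inv (A B : algebra S) (f : A -> B) (x : A) :
  is_hom f -> Inv zero plus x -> Inv zero plus (f x).
Proof.
move=> Hf [y [H1 H2]]; exists (f y).
by rewrite -!hom_plus // H1 H2 hom_zero.
Qed.

Lemma Inv_interp (A : algebra S) (HA : inV A) o (args : 'I_(arity o) -> A) :
  (forall i, Inv zero plus (args i)) -> Inv zero plus (interp A o args).
Proof.
move=> H.
pose ys i := proj1_sig (constructive_indefinite_description _ (H i)).
have Hy i : p (args i) (ys i) = z A /\ p (ys i) (args i) = z A.
  exact: (proj2_sig (constructive_indefinite_description _ (H i))).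
exists (interp A o ys); rewrite -!interp_plus //.
split.
  have -> : (fun i => p (args i) (ys i)) = (fun _ => z A).
    by apply: functional_extensionality => i; case: (Hy i).
  exact: interp_zero.
have -> : (fun i => p (ys i) (args i)) = (fun _ => z A).
  by apply: functional_extensionality => i; case: (Hy i).
exact: interp_zero.
Qed.

Lemma sval_inj (T : Type) (P : T -> Prop) (x y : {a : T | P a}) :
  proj1_sig x = proj1_sig y -> x = y.
Proof.
case: x => x Px; case: y => y Py /= E; subst y.
by rewrite (proof_irrelevance _ Px Py).
Qed.

Definition InvAlg (A : algebra S) (HA : inV A) : algebra S :=
  @Algebra S {x : A | Inv zero plus x}
    (fun o args => exist _ (interp A o (fun i => proj1_sig (args i)))
                     (Inv_interp HA (fun i => proj2_sig (args i)))).

Lemma InvAlg_hom (A : algebra S) (HA : inV A) :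
  is_hom (fun x : InvAlg HA => proj1_sig x).
Proof. by []. Qed.

Lemma InvAlg_inV (A : algebra S) (HA : inV A) : inV (InvAlg HA).
Proof.
move=> s t E v; apply: sval_inj.
rewrite !(eval_hom _ _ (@InvAlg_hom A HA)).
exact: (HA s t E (fun n => proj1_sig (v n))).
Qed.

Lemma tensor_abelian (A B T : algebra S) (t : A -> B -> T) :
  inVAb zero plus A -> inVAb zero plus B -> is_tensor t -> abelian zero plus T.
Proof.
move=> [HA AbA] [HB AbB] [HT [[Ht1 Ht2] Hu]].
pose t' a b : InvAlg HT := exist _ (t a b) (hom_Inv (Ht1 a) (AbB b)).
have Hbi : bimorphism t'.
  split=> [a|b] o args; apply: sval_inj => /=.
    exact: Ht1.
  exact: (Ht2 b).
have [[h [Hh Ht']] _] := Hu _ t' (@InvAlg_inV T HT) Hbi.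
have [_ Hun] := Hu _ t HT (conj Ht1 Ht2).
move=> x.
have <- : proj1_sig (h x) = x.
  apply: (Hun (fun x => proj1_sig (h x)) id) => //.
  - by move=> o args /=; rewrite Hh.
  - by move=> a b; rewrite Ht'.
exact: (proj2_sig (h x)).
Qed.


Definition prodAlg (A B : algebra S) : algebra S :=
  @Algebra S (A * B)%type
    (fun o args => (interp A o (fun i => (args i).1), interp B o (fun i => (args i).2))).

Lemma fst_hom (A B : algebra S) : is_hom (fun x : prodAlg A B => x.1).
Proof. by []. Qed.
Lemma snd_hom (A B : algebra S) : is_hom (fun x : prodAlg A B => x.2).
Proof. by []. Qed.

Lemma prod_inV (A B : algebra S) : inV A -> inV B -> inV (prodAlg A B).
Proof.
move=> HA HB s t E v.
have e1 := eval_hom v s (@fst_hom A B); have e2 := eval_hom v s (@snd_hom A B).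
have e3 := eval_hom v t (@fst_hom A B); have e4 := eval_hom v t (@snd_hom A B).
rewrite [eval v s]surjective_pairing [eval v t]surjective_pairing.
by rewrite e1 e2 e3 e4 (HA s t E) (HB s t E).
Qed.

Lemma prod_plus (A B : algebra S) (x y : prodAlg A B) :
  p x y = (p x.1 y.1, p x.2 y.2).
Proof.
rewrite [p x y]surjective_pairing.
by rewrite (hom_plus _ _ (@fst_hom A B)) (hom_plus _ _ (@snd_hom A B)).
Qed.

Lemma prod_zero (A B : algebra S) : z (prodAlg A B) = (z A, z B).
Proof.
rewrite [z _]surjective_pairing.
by rewrite (hom_zero (@fst_hom A B)) (hom_zero (@snd_hom A B)).
Qed.

Section Quot.
Variable X : Type.
Variable r : X -> X -> Prop.
Hypothesis rR : forall x, r x x.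
Hypothesis rS : forall x y, r x y -> r y x.
Hypothesis rT : forall x y w, r x y -> r y w -> r x w.

Definition Q := {P : X -> Prop | exists x, P = r x}.
Definition cls (x : X) : Q := exist _ (r x) (ex_intro _ x erefl).
Lemma cls_eq x y : r x y -> cls x = cls y.
Proof.
move=> H; apply: sval_inj => /=; apply: functional_extensionality => w.
apply: propositional_extensionality; split => ?; eauto.
Qed.
Lemma cls_r x y : cls x = cls y -> r x y.
Proof. move/(congr1 (@proj1_sig _ _)) => /= ->; exact: rR. Qed.
Definition repr (q : Q) : X :=
  proj1_sig (constructive_indefinite_description _ (proj2_sig q)).
Lemma cls_repr q : cls (repr q) = q.
Proof.
apply: sval_inj; rewrite /repr /=.
by case: (constructive_indefinite_description _ _).
Qed.
Lemma repr_r x : r x (repr (cls x)).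
Proof. apply: cls_r; by rewrite cls_repr. Qed.
Lemma cls_surj q : exists x, q = cls x.
Proof. by exists (repr q); rewrite cls_repr. Qed.
End Quot.


Section GC.
Variable A : algebra S.
Hypothesis HA : inV A.
Local Notation AA := (prodAlg A A).

Definition grel (x y : AA) : Prop :=
  exists k, p (p x.1 y.2) k = p (p y.1 x.2) k.

Lemma grelR x : grel x x.
Proof. by exists (z A). Qed.
Lemma grelS x y : grel x y -> grel y x.
Proof. by case=> k Hk; exists k. Qed.
Lemma grelT x y w : grel x y -> grel y w -> grel x w.
Proof.
case: x => a b; case: y => c d; case: w => e f /= [k H1] [l H2].
exists (p d (p k l)).
transitivity (p (p (p a d) k) (p f l)).
  by rewrite (pI HA (p a d)) (pAC HA a d f) (pA HA (p a f)).
rewrite H1.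
transitivity (p (p (p c f) l) (p b k)).
  by rewrite (pI HA (p c b)) (pAC HA c b f) (pC HA k l) (pI HA (p c f)).
rewrite H2.
by rewrite (pI HA (p e d)) (pAC HA e d b) (pA HA (p e b)) (pC HA l k).
Qed.


Lemma grel_compat o (x y : 'I_(arity o) -> AA) :
  (forall i, grel (x i) (y i)) -> grel (interp AA o x) (interp AA o y).
Proof.
move=> H.
pose k i := proj1_sig (constructive_indefinite_description _ (H i)).
have Hk i : p (p (x i).1 (y i).2) (k i) = p (p (y i).1 (x i).2) (k i).
  exact: (proj2_sig (constructive_indefinite_description _ (H i))).
exists (interp A o k) => /=.
rewrite -!interp_plus //.
by congr (interp A o); apply: functional_extensionality => i; rewrite Hk.
Qed.

Local Notation QA := (Q grel).
Local Notation clsA := (@cls AA grel).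
Local Notation reprA := (@repr AA grel).

Definition GCAlg : algebra S :=
  @Algebra S QA (fun o qs => clsA (interp AA o (fun i => reprA (qs i)))).

Lemma cls_hom : is_hom (clsA : AA -> GCAlg).
Proof.
move=> o args. apply: (@cls_eq AA grel grelS grelT).
apply: grel_compat => i; exact: (@repr_r AA grel grelR).
Qed.

Lemma GC_inV : inV GCAlg.
Proof.
move=> s t E v.
have -> : v = (fun n => clsA (reprA (v n))).
  by apply: functional_extensionality => n; rewrite cls_repr.
rewrite -!(eval_hom _ _ cls_hom).
by rewrite (prod_inV HA HA E).
Qed.

Lemma GC_plus (x y : AA) : p (clsA x : GCAlg) (clsA y) = clsA (p x.1 y.1, p x.2 y.2).
Proof. by rewrite -(hom_plus _ _ cls_hom) prod_plus. Qed.

Lemma GC_zero : z GCAlg = clsA (z A, z A).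
Proof. by rewrite -(hom_zero cls_hom) prod_zero. Qed.

Lemma GC_abelian : abelian zero plus GCAlg.
Proof.
move=> q; case: (cls_surj q) => [[a b]] ->.
exists (clsA (b, a)); rewrite !GC_plus GC_zero /=.
split; apply: (@cls_eq AA grel grelS grelT); exists (z A) => /=;
  rewrite !(px0 HA) (p0x HA); [exact: pC | exact: pC].
Qed.

Definition etaA (a : A) : GCAlg := clsA (a, z A).

Lemma eta_hom : is_hom etaA.
Proof.
move=> o args; rewrite /etaA.
rewrite -cls_hom /=; congr clsA; congr pair.
by rewrite interp_zero.
Qed.


Section Univ.
Variable B : algebra S.
Hypothesis HB : inV B.
Hypothesis AbB : abelian zero plus B.

Definition nB (y : B) : B := proj1_sig (constructive_indefinite_description _ (AbB y)).
Lemma nBr y : p y (nB y) = z B.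
Proof. exact: (proj1 (proj2_sig (constructive_indefinite_description _ (AbB y)))). Qed.

Lemma inv_uniq (x y : B) : p x y = z B -> y = nB x.
Proof.
move=> H.
rewrite -[nB x](p0x HB) -H (pA HB) (pC HB y) -(pA HB) nBr (p0x HB).
done.
Qed.

Lemma cancelB (a b k : B) : p a k = p b k -> a = b.
Proof.
move=> H; rewrite -[a](px0 HB) -[b](px0 HB) -(nBr k) -!(pA HB) H //.
Qed.

Lemma keyB (x y x' y' k : B) :
  p (p x y') k = p (p x' y) k -> p x (nB y) = p x' (nB y').
Proof.
move=> /cancelB H.
rewrite -[p x (nB y)](px0 HB) -(nBr y') (pI HB) H (pC HB (nB y)) (pI HB) nBr.
exact: px0.
Qed.

Lemma nB_interp o (y : 'I_(arity o) -> B) :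
  nB (interp B o y) = interp B o (fun i => nB (y i)).
Proof.
symmetry; apply: inv_uniq; rewrite -interp_plus //.
have -> : (fun i => p (y i) (nB (y i))) = (fun _ => z B).
  by apply: functional_extensionality => i; exact: nBr.
exact: interp_zero.
Qed.

Variable f : A -> B.
Hypothesis Hf : is_hom f.

Definition hA (q : GCAlg) : B :=
  p (f (reprA q).1) (nB (f (reprA q).2)).

Lemma hA_cls x : hA (clsA x) = p (f x.1) (nB (f x.2)).
Proof.
rewrite /hA.
case: (@repr_r AA grel grelR x) => k Hk.
symmetry; apply: (@keyB _ _ _ _ (f k)).
by rewrite -!(hom_plus _ _ Hf) Hk.
Qed.

Lemma hA_hom : is_hom hA.
Proof.
move=> o qs.
rewrite [in LHS]/interp /= hA_cls /= !Hf nB_interp.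
rewrite /hA -interp_plus //.
Qed.

Lemma hA_eta a : hA (etaA a) = f a.
Proof.
rewrite /etaA hA_cls /= (hom_zero Hf).
have <- : z B = nB (z B) by apply: inv_uniq; exact: px0.
exact: px0.
Qed.

Lemma hA_uniq (hh : GCAlg -> B) : is_hom hh -> (forall a, hh (etaA a) = f a) ->
  forall q, hh q = hA q.
Proof.
move=> Hh He q; case: (cls_surj q) => [[a b]] ->.
rewrite hA_cls /=.
have -> : clsA (a, b) = p (etaA a) (clsA (z A, b)).
  by rewrite /etaA GC_plus /= (px0 HA) (p0x HA).
rewrite (hom_plus _ _ Hh) He; congr p.
apply: inv_uniq.
rewrite -He -(hom_plus _ _ Hh) /etaA GC_plus /= (px0 HA) (p0x HA).
have -> : clsA (b, b) = clsA (z A, z A).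
  apply: (@cls_eq AA grel grelS grelT); exists (z A) => /=.
  by rewrite (px0 HA) (p0x HA).
by rewrite -GC_zero (hom_zero Hh).
Qed.
End Univ.


Lemma GC_reflection : reflection zero plus etaA.
Proof.
split; first by split; [exact: GC_inV | exact: GC_abelian].
split; first exact: eta_hom.
move=> B f [HB AbB] Hf; split.
  exists (hA AbB f); split; [exact: hA_hom | exact: hA_eta].
move=> h1 h2 H1 H2 E1 E2 r.
by rewrite (hA_uniq HB AbB Hf H1 E1) (hA_uniq HB AbB Hf H2 E2).
Qed.

End GC.
End H.

Lemma hom_comp (V : variety) (A B C : algebra (vsig V)) (f : A -> B) (g : B -> C) :
  is_hom f -> is_hom g -> is_hom (fun x => g (f x)).
Proof. by move=> Hf Hg o args; rewrite Hf Hg. Qed.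

Unset Implicit Arguments.
Set Strict Implicit.

Theorem proposition1p6 (V : variety) (zero : term (vsig V) Empty_set)
  (plus : term (vsig V) bool)
  (Hent : entropic V) (HJT : jonsson_tarski zero plus) :
  (* (1) V_Ab is reflective (fullness is by definition: same homomorphisms)
         and isomorphism-closed *)
  ((forall A : algebra (vsig V), inV A ->
      exists (R : algebra (vsig V)) (eta : A -> R), reflection zero plus eta)
   /\
   (forall (A B : algebra (vsig V)) (f : A -> B) (k : B -> A),
      inVAb zero plus A -> inV B -> is_hom f -> is_hom k ->
      (forall a, k (f a) = a) -> (forall b, f (k b) = b) ->
      inVAb zero plus B))
  /\
  (* (2) Inv(A) is a subalgebra lying in V_Ab, and Inv is right adjoint to the
         embedding (the inclusion Inv(A) -> A is couniversal among maps from
         V_Ab); Inv restricted to V_Ab is the identity *)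
  (forall A : algebra (vsig V), inV A ->
     (forall (o : op_sym (vsig V)) (args : 'I_(arity o) -> A),
        (forall i, Inv zero plus (args i)) -> Inv zero plus (interp A o args))
     /\ (forall x : A, Inv zero plus x ->
           exists y : A, plusA plus x y = zeroA zero A /\
                         plusA plus y x = zeroA zero A /\ Inv zero plus y)
     /\ (forall (B : algebra (vsig V)) (f : B -> A),
           inVAb zero plus B -> is_hom f -> forall b, Inv zero plus (f b))
     /\ (abelian zero plus A -> forall x : A, Inv zero plus x))
  /\
  (* (3) V_Ab is closed under the entropic tensor product of V, which is then
         also the tensor product of V_Ab; the unit of V_Ab is R F1 *)
  ((forall (A B T : algebra (vsig V)) (t : A -> B -> T),
      inVAb zero plus A -> inVAb zero plus B -> is_tensor t ->
      inVAb zero plus T /\ is_tensorAb zero plus t)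
   /\
   (forall (F : algebra (vsig V)) (g : F), free_on_one g ->
      forall (R : algebra (vsig V)) (eta : F -> R), reflection zero plus eta ->
      free_on_oneAb zero plus (eta g)))
  /\
  (* (4) the embedding V_Ab -> V is a (lax) symmetric monoidal functor, for any
         choice of the tensor products and units of V and of V_Ab *)
  (forall (tensV : algebra (vsig V) -> algebra (vsig V) -> algebra (vsig V))
          (tv : forall A B : algebra (vsig V), A -> B -> tensV A B)
          (HtV : forall A B : algebra (vsig V), inV A -> inV B -> is_tensor (tv A B))
          (tensA : algebra (vsig V) -> algebra (vsig V) -> algebra (vsig V))
          (ta : forall A B : algebra (vsig V), A -> B -> tensA A B)
          (HtA : forall A B : algebra (vsig V), inVAb zero plus A -> inVAb zero plus B ->
                   is_tensorAb zero plus (ta A B))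
          (I : algebra (vsig V)) (g : I) (HI : free_on_one g)
          (J : algebra (vsig V)) (h : J) (HJ : free_on_oneAb zero plus h),
   exists (mu : forall A B : algebra (vsig V), tensV A B -> tensA A B) (eps : I -> J),
     is_hom eps
     /\ (forall A B : algebra (vsig V), inVAb zero plus A -> inVAb zero plus B -> is_hom (mu A B))
     (* naturality of mu *)
     /\ (forall (A A' B B' : algebra (vsig V)) (f : A -> A') (k : B -> B'),
           inVAb zero plus A -> inVAb zero plus A' ->
           inVAb zero plus B -> inVAb zero plus B' ->
           is_hom f -> is_hom k ->
           forall phi : tensA A B -> tensA A' B', is_hom phi ->
             (forall a b, phi (ta A B a b) = ta A' B' (f a) (k b)) ->
             forall a b, phi (mu A B (tv A B a b)) =
                         mu A' B' (tv A' B' (f a) (k b)))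
     (* associativity coherence *)
     /\ (forall A B C : algebra (vsig V), inVAb zero plus A -> inVAb zero plus B -> inVAb zero plus C ->
           forall alpha : tensA (tensA A B) C -> tensA A (tensA B C), is_hom alpha ->
             (forall a b c, alpha (ta _ C (ta A B a b) c) = ta A _ a (ta B C b c)) ->
             forall a b c,
               alpha (mu (tensA A B) C (tv _ C (mu A B (tv A B a b)) c)) =
               mu A (tensA B C) (tv A _ a (mu B C (tv B C b c))))
     (* left unit coherence *)
     /\ (forall A : algebra (vsig V), inVAb zero plus A ->
           forall l : tensA J A -> A, is_hom l -> (forall a, l (ta J A h a) = a) ->
             forall a, l (mu J A (tv J A (eps g) a)) = a)
     (* right unit coherence *)
     /\ (forall A : algebra (vsig V), inVAb zero plus A ->
           forall r : tensA A J -> A, is_hom r -> (forall a, r (ta A J a h) = a) ->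
             forall a, r (mu A J (tv A J a (eps g))) = a)
     (* symmetry coherence *)
     /\ (forall A B : algebra (vsig V), inVAb zero plus A -> inVAb zero plus B ->
           forall s : tensA A B -> tensA B A, is_hom s ->
             (forall a b, s (ta A B a b) = ta B A b a) ->
             forall a b, s (mu A B (tv A B a b)) = mu B A (tv B A b a))).
Proof.
split.
  split.
    move=> A HA; eexists; eexists; exact: (GC_reflection Hent HJT HA).
  move=> A B f k [HA AbA] HB Hf Hk Hkf Hfk; split => // b.
  rewrite -(Hfk b); exact: (hom_Inv Hf (AbA _)).
split.
  move=> A HA; split; first by move=> o args; exact: (Inv_interp Hent HA).
  split; first by move=> x [y [H1 H2]]; exists y; split => //; split => //; exists x.
  split; first by move=> B f [_ AbB] Hf b; exact: (hom_Inv Hf (AbB b)).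
  by move=> Ab x; exact: Ab x.
split.
  split.
    move=> A B T t HA HB Ht.
    have AbT := tensor_abelian Hent HA HB Ht.
    case: Ht => [HT [Hbi Hu]].
    have HTab : inVAb zero plus T by split.
    split => //; split => //; split => //.
    move=> C f [HC _] Hf; exact: Hu C f HC Hf.
  move=> F g [HF HFu] R eta [HR [Heta Hr]].
  split => //.
  move=> B b [HB AbB]; split.
    have [[h0 [Hh0 Hg]] _] := HFu B b HB.
    have [[h' [Hh' E]] _] := Hr B h0 (conj HB AbB) Hh0.
    by exists h'; split => //; rewrite E.
  move=> h1 h2 H1 H2 E1 E2 x.
  have [_ U] := Hr B (fun a => h1 (eta a)) (conj HB AbB) (hom_comp Heta H1).
  apply: U => // a.
  have [_ UF] := HFu B b HB.
  symmetry; apply: (UF (fun a => h1 (eta a)) (fun a => h2 (eta a))) => //.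
  - exact: hom_comp Heta H1.
  - exact: hom_comp Heta H2.
move=> tensV tv HtV tensA ta HtA I g HI J h HJ.
have mu_ex : forall A B : algebra (vsig V), inVAb zero plus A /\ inVAb zero plus B ->
  exists m : tensV A B -> tensA A B, is_hom m /\ forall a b, m (tv A B a b) = ta A B a b.
  move=> A B [HA HB].
  have [[HT _] [Hbi _]] := HtA A B HA HB.
  have [[m Hm] _] := (HtV A B HA.1 HB.1).2.2 _ (ta A B) HT Hbi.
  by exists m.
pose mu A B : tensV A B -> tensA A B := fun x =>
  match excluded_middle_informative (inVAb zero plus A /\ inVAb zero plus B) with
  | left H => proj1_sig (constructive_indefinite_description _ (mu_ex A B H)) x
  | right _ => zeroA zero _
  end.
have mu_spec : forall A B : algebra (vsig V), inVAb zero plus A -> inVAb zero plus B ->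
   is_hom (mu A B) /\ forall a b, mu A B (tv A B a b) = ta A B a b.
  move=> A B HA HB; rewrite /mu.
  case: excluded_middle_informative => [H|]; last by case; split.
  exact: (proj2_sig (constructive_indefinite_description _ (mu_ex A B H))).
have HJab := HJ.1.
have [[eps [Heps Eg]] _] := HI.2 J h HJab.1.
exists mu, eps; split => //.
split; first by move=> A B HA HB; case: (mu_spec A B HA HB).
split.
  move=> A A' B B' f k HA HA' HB HB' Hf Hk phi Hphi Ephi a b.
  rewrite (mu_spec A B HA HB).2 (mu_spec A' B' HA' HB').2; exact: Ephi.
split.
  move=> A B C HA HB HC alpha Halpha Ea a b c.
  have HAB := (HtA A B HA HB).1; have HBC := (HtA B C HB HC).1.
  rewrite (mu_spec A B HA HB).2 (mu_spec B C HB HC).2.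
  rewrite (mu_spec _ C HAB HC).2 (mu_spec A _ HA HBC).2; exact: Ea.
split.
  move=> A HA l Hl El a; rewrite Eg (mu_spec J A HJab HA).2; exact: El.
split.
  move=> A HA r Hr Er a; rewrite Eg (mu_spec A J HA HJab).2; exact: Er.
move=> A B HA HB s Hs Es a b.
rewrite (mu_spec A B HA HB).2 (mu_spec B A HB HA).2; exact: Es.
Qed.
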